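(* Let $G$ be a graph on the vertex set $[n]=\{1,\ldots,n\}$ and let $k$ be an integer with $0\le k\le n$. Then $G$ is $k$-connected if and only if $\beta_{i,i+1}(\mathbb{k}[\Delta(G)])=0$ for all integers $i\ge n-k$. In particular, $\kappa(G)=\max\{k\in\{0,\ldots,n\}\mid \beta_{i,i+1}(\mathbb{k}[\Delta(G)])=0\text{ for all } i\ge n-k\}$.
   Context: $\mathbb{k}$ is a field (of characteristic zero) and $R=\mathbb{k}[x_1,\ldots,x_n]$. For a simplicial complex $\Gamma$ on $[n]$, the Stanley–Reisner ideal $I_\Gamma$ is generated by the monomials $x_{i_1}\cdots x_{i_l}$ with $\{i_1,\ldots,i_l\}\notin\Gamma$, and the face ring is $\mathbb{k}[\Gamma]=R/I_\Gamma$. The clique complex $\Delta(G)$ of a graph $G$ is the simplicial complex whose faces are the vertex sets of cliques of $G$. $\beta_{i,j}(M)=\dim_{\mathbb{k}}\mathrm{Tor}_i^R(M,\mathbb{k})_j$ are the graded Betti numbers (standard $\mathbb{Z}$-grading with $\deg x_i=1$). A graph is $k$-connected if it has at least $k$ vertices and removing any set of fewer than $k$ vertices leaves a connected graph (every graph is $0$-connected); $\kappa(G)$ is the largest $k$ such that $G$ is $k$-connected. *)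

(* Defs.v *)
From HB Require Import structures.
From mathcomp Require Import all_boot all_order all_algebra.
Set Implicit Arguments. Unset Strict Implicit. Unset Printing Implicit Defensive.
Import GRing.Theory.
Local Open Scope ring_scope.

Definition simple_graph (n : nat) (e : rel 'I_n) : Prop :=
  symmetric e /\ irreflexive e.

Definition clique_complex (n : nat) (e : rel 'I_n) : pred {set 'I_n} :=
  fun s => [forall u, forall v, ((u \in s) && (v \in s) && (u != v)) ==> e u v].

Definition connected_minus (n : nat) (e : rel 'I_n) (S : {set 'I_n}) : bool :=
  [forall u, forall v, ((u \notin S) && (v \notin S)) ==>
     connect [rel x y | [&& e x y, x \notin S & y \notin S]] u v].

Definition kconnected (n : nat) (e : rel 'I_n) (k : nat) : bool :=
  (k <= n)%N && [forall S : {set 'I_n}, (#|S| < k)%N ==> connected_minus e S].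

Definition kappa (n : nat) (e : rel 'I_n) : nat :=
  \max_(k < n.+1 | kconnected e k) (k : nat).

(* ---------- graded Betti numbers of the face ring k[Gamma] ----------
   beta_{i,j}(k[Gamma]) = dim Tor_i^R(k[Gamma], k)_j, computed as the homology
   of k[Gamma] (x)_R K(x_1..x_n), K the Koszul resolution of k.
   Degree-j part of k[Gamma] (x) /\^i k^n has basis m (x) e_F where m is a
   monomial of degree j - i whose support is a face of Gamma (these monomials
   form the k-basis of k[Gamma] = R / I_Gamma) and F is an i-subset of [n].
   Differential: d(m e_F) = sum_{l in F} (-1)^{#{g in F | g < l}} (x_l m) e_{F\l},
   where x_l m = 0 in k[Gamma] when its support is not a face. *)

(* monomials of degree <= j: exponent vectors with entries <= j *)
Definition monom (n j : nat) := {ffun 'I_n -> 'I_j.+1}.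
Definition mdeg (n j : nat) (a : monom n j) : nat := (\sum_v (a v : nat))%N.
Definition msupp (n j : nat) (a : monom n j) : {set 'I_n} :=
  [set v | (a v : nat) != 0%N].

Definition kbasis (n : nat) (Gam : pred {set 'I_n}) (i j : nat)
  : {set monom n j * {set 'I_n}} :=
  [set p : monom n j * {set 'I_n} | [&& (i <= j)%N, mdeg p.1 == (j - i)%N, #|p.2| == i & Gam (msupp p.1)]].

Definition kentry (F : fieldType) (n j : nat) (p q : monom n j * {set 'I_n}) : F :=
  match [pick l | [&& l \notin q.2, p.2 == l |: q.2 &
                    [forall v, (q.1 v : nat) == (p.1 v + (v == l))%N]]] with
  | Some l => (-1) ^+ #|[set g in p.2 | (g < l)%N]|
  | None => 0
  end.

(* differential C_{i+1} -> C_i in internal degree j (row-vector convention) *)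
Definition kdiff (F : fieldType) (n : nat) (Gam : pred {set 'I_n}) (i j : nat)
  : 'M[F]_(#|kbasis Gam i.+1 j|, #|kbasis Gam i j|) :=
  \matrix_(r, c) kentry F (enum_val r) (enum_val c).

(* beta_{i,j} = dim ker d_i - rank d_{i+1}  (d_0 = 0) *)
Definition betti (F : fieldType) (n : nat) (Gam : pred {set 'I_n}) (i j : nat) : nat :=
  (#|kbasis Gam i j|
   - (if i is i'.+1 then \rank (kdiff F Gam i' j) else 0)
   - \rank (kdiff F Gam i j))%N.

(* Submission.v *)
Require Import Defs.
From HB Require Import structures.
From mathcomp Require Import all_boot all_order all_algebra.
From mathcomp Require Import zify.
Set Implicit Arguments. Unset Strict Implicit. Unset Printing Implicit Defensive.
Import GRing.Theory.


Section Gen.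
Local Open Scope ring_scope.
Variable F : fieldType.

Definition wf (T : finType) (A : {set T}) (w : 'rV[F]_#|A|) (x : T) : F :=
  \sum_k w 0 k * ((enum_val k == x) : nat)%:R.

Lemma wfE (T : finType) (A : {set T}) (w : 'rV[F]_#|A|) k : wf w (enum_val k) = w 0 k.
Proof.
rewrite /wf (bigD1 k) //= eqxx mulr1 big1 ?addr0 // => k' nk.
case: eqP => [/enum_val_inj E|]; last by rewrite mulr0.
by rewrite E eqxx in nk.
Qed.

Lemma sum_enum (T : finType) (A : {set T}) (G : T -> F) :
  \sum_(k < #|A|) G (enum_val k) = \sum_(x in A) G x.
Proof. by rewrite (big_enum_val G). Qed.

Lemma mulmx_wf (T T' : finType) (A : {set T}) (B : {set T'}) (w : 'rV[F]_#|A|)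
   (h : T -> T' -> F) c :
  (w *m (\matrix_(r < #|A|, c < #|B|) h (enum_val r) (enum_val c))) 0 c
   = \sum_(x in A) wf w x * h x (enum_val c).
Proof.
rewrite mxE -sum_enum; apply: eq_bigr => k _.
by rewrite wfE mxE.
Qed.

Lemma mulmx_col (T : finType) (A : {set T}) (w : 'rV[F]_#|A|) (psi : T -> F) :
  (w *m (\col_(k < #|A|) psi (enum_val k))) 0 0 = \sum_(x in A) wf w x * psi x.
Proof.
rewrite mxE -sum_enum; apply: eq_bigr => k _.
by rewrite wfE mxE.
Qed.

Lemma wf_row (T T' : finType) (A : {set T}) (B : {set T'}) (h : T -> T' -> F) r x :
  x \in B ->
  wf (row r (\matrix_(r < #|A|, c < #|B|) h (enum_val r) (enum_val c))) x
   = h (enum_val r) x.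
Proof.
move=> xB; rewrite -(enum_rankK_in xB xB) wfE mxE.
by rewrite mxE.
Qed.

Lemma wf_rowof (T : finType) (A : {set T}) (g : T -> F) x :
  x \in A -> wf (\row_(k < #|A|) g (enum_val k)) x = g x.
Proof. by move=> xA; rewrite -(enum_rankK_in xA xA) wfE mxE. Qed.

Lemma wf0 (T : finType) (A : {set T}) (w : 'rV[F]_#|A|) :
  (forall x, x \in A -> wf w x = 0) -> w = 0.
Proof.
by move=> H; apply/rowP => k; rewrite mxE -wfE H // enum_valP.
Qed.

Lemma inj_rank m p (M : 'M[F]_(m, p)) :
  (forall z : 'rV_m, z *m M = 0 -> z = 0) -> \rank M = m.
Proof.
move=> H.
have K0 : kermx M == 0.
  by apply/rowV0P => v /sub_kermxP /H.
have := mxrank_ker M; rewrite (eqP K0) mxrank0 => /esym/eqP.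
rewrite subn_eq0 => le; apply/eqP; rewrite eqn_leq le rank_leq_row.
done.
Qed.

Lemma ker_bound m p q (K : 'M[F]_(m, p)) (P : 'M[F]_(p, q)) :
  (forall w : 'rV_p, (w <= K)%MS -> w *m P = 0 -> w = 0) -> (\rank K <= q)%N.
Proof.
move=> H.
have E : (K :&: kermx P)%MS == 0.
  apply/rowV0P => v; rewrite sub_capmx => /andP[vK /sub_kermxP vP].
  exact: H.
have := mxrank_mul_ker K P; rewrite (eqP E) mxrank0 addn0 => <-.
exact: rank_leq_col.
Qed.

Lemma strict_rank a b c (A : 'M[F]_(a, b)) (D : 'M[F]_(b, c)) (z : 'rV_b) (phi : 'cV_b) :
  A *m D = 0 -> z *m D = 0 -> A *m phi = 0 -> z *m phi != 0 ->
  (\rank A < b - \rank D)%N.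
Proof.
move=> AD zD Aphi zphi.
rewrite -mxrank_ker; apply: rank_ltmx.
rewrite ltmxE; apply/andP; split; first exact/sub_kermxP.
apply/negP => /submxP[X EX].
have zK : (z <= kermx D)%MS by exact/sub_kermxP.
move: zK => /submxP[Y EY].
have : (z <= A)%MS.
  by rewrite EY EX mulmxA submxMl.
move=> /submxP[Z EZ]; move: zphi; rewrite EZ -mulmxA Aphi mulmx0 eqxx.
done.
Qed.
End Gen.


Section Comb.
Local Open Scope ring_scope.
Variable F : fieldType.
Variable n : nat.
Variable e : rel 'I_n.
Hypothesis Ge : simple_graph e.
Local Notation Gam := (clique_complex e).

Definition eps (S : {set 'I_n}) (l : 'I_n) : F := (-1) ^+ #|[set g in S | (g < l)%N]|.

Definition mk j (f : 'I_n -> nat) : monom n j := [ffun v => inord (f v)].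
Definition e1 j a := mk j (fun t => nat_of_bool (t == a)).
Definition e2 j a b := mk j (fun t => (nat_of_bool (t == a) + nat_of_bool (t == b))%N).
Definition m0 j := mk j (fun _ => 0%N).

Lemma mkE j f t : (f t <= j)%N -> (mk j f t : nat) = f t.
Proof. by move=> h; rewrite /mk ffunE inordK. Qed.

Lemma monom_eq j (m m' : monom n j) : (forall t, (m t : nat) = m' t) -> m = m'.
Proof. by move=> h; apply/ffunP => t; apply/val_inj/h. Qed.

Lemma e1E j a t : (e1 j.+1 a t : nat) = (t == a).
Proof. by rewrite mkE //; case: (t == a). Qed.

Lemma e2E j a b t : (e2 j.+2 a b t : nat) = ((t == a) + (t == b))%N.
Proof. by rewrite mkE //; case: (t == a); case: (t == b). Qed.

Lemma m0E j t : (m0 j t : nat) = 0%N.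
Proof. by rewrite mkE. Qed.

Lemma eps2 S l : eps S l * eps S l = 1.
Proof. by rewrite /eps -exprD -signr_odd oddD addbb. Qed.

Lemma kentryE j (p q : monom n j * {set 'I_n}) l :
  l \notin q.2 -> p.2 = l |: q.2 ->
  (forall v, (q.1 v : nat) = (p.1 v + (v == l))%N) -> kentry F p q = eps p.2 l.
Proof.
move=> lq pq qv; rewrite /kentry.
case: pickP => [l' /and3P[l'q /eqP pq' /forallP qv'] | /(_ l)].
  have : l' \in l |: q.2 by rewrite -pq pq' setU11.
  rewrite in_setU1 (negbTE l'q) orbF => /eqP -> //.
by rewrite lq pq eqxx /=; move/negbT; rewrite negb_forall => /existsP[v]; rewrite qv eqxx.
Qed.

Lemma kentry_supp j (p q : monom n j * {set 'I_n}) :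
  kentry F p q != 0 -> exists l, [/\ l \notin q.2, p.2 = l |: q.2 &
     forall v, (q.1 v : nat) = (p.1 v + (v == l))%N].
Proof.
rewrite /kentry; case: pickP => [l /and3P[lq /eqP pq /forallP qv] _|]; last by rewrite eqxx.
by exists l; split => // v; apply/eqP/qv.
Qed.

Lemma sum_nat_ind (m : monom n 1%N) : True. Proof. by []. Qed.

Lemma mdeg0 j (m : monom n j) : mdeg m = 0%N -> m = m0 j.
Proof.
move=> /eqP; rewrite /mdeg (sum_nat_eq0 predT) => /forallP h.
by apply: monom_eq => t; rewrite m0E; apply/eqP/(implyP (h t)).
Qed.

Lemma mdeg1 j (m : monom n j) : mdeg m = 1%N -> exists a, forall t, (m t : nat) = (t == a).
Proof.
rewrite /mdeg => h.
have [a ha] : exists a, (0 < m a)%N.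
  have : (\sum_t (m t : nat) != 0)%N by rewrite h.
  rewrite (sum_nat_eq0 predT) negb_forall => /existsP[a ha]; exists a.
  by rewrite lt0n; move: ha; rewrite implyTb.
exists a => t.
move: h; rewrite (bigD1 a) //= => h.
have hr : (\sum_(i | i != a) (m i : nat) = 0)%N by move: ha h; case: (m a : nat) => // [[|k]] //= _; case.
case: (eqVneq t a) => [->|ta].
  by move: h; rewrite hr addn0.
by apply/eqP; move/eqP: hr; rewrite (sum_nat_eq0 (fun i => i != a)) => /forallP /(_ t) /implyP; apply.
Qed.

Lemma sum_eq1 a : (\sum_(t : 'I_n) nat_of_bool (t == a))%N = 1%N.
Proof. by rewrite (bigD1 a) //= eqxx big1 // => t /negbTE ->. Qed.

Lemma cliqueP (S : {set 'I_n}) : (forall u v, u \in S -> v \in S -> u != v -> e u v) -> Gam S.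
Proof.
move=> h; apply/forallP => u; apply/forallP => v; apply/implyP => /andP[/andP[uS vS] uv].
exact: h.
Qed.

Lemma msupp_e1 j a : msupp (e1 j.+1 a) = [set a].
Proof. by apply/setP => t; rewrite !inE e1E; case: (t == a). Qed.

Lemma B_elem i (p : monom n i.+1 * {set 'I_n}) : p \in kbasis Gam i i.+1 ->
  exists a, p.1 = e1 i.+1 a /\ #|p.2| = i.
Proof.
rewrite inE => /and4P[_ /eqP d /eqP c _].
move: d; rewrite subSnn => /mdeg1[a ha]; exists a; split=> //.
by apply: monom_eq => t; rewrite ha e1E.
Qed.

Lemma A_elem i (p : monom n i.+1 * {set 'I_n}) : p \in kbasis Gam i.+1 i.+1 ->
  p.1 = m0 i.+1 /\ #|p.2| = i.+1.
Proof.
rewrite inE => /and4P[_ /eqP d /eqP c _].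
by move: d; rewrite subnn => /mdeg0.
Qed.

Lemma mem_B i a (G : {set 'I_n}) : #|G| = i -> (e1 i.+1 a, G) \in kbasis Gam i i.+1.
Proof.
move=> cG; rewrite inE /= leqnSn cG eqxx subSnn /=; apply/andP; split.
  by rewrite /mdeg (eq_bigr _ (fun t _ => e1E i a t)) sum_eq1.
rewrite msupp_e1; apply: cliqueP => u v; rewrite !inE => /eqP -> /eqP ->.
by rewrite eqxx.
Qed.

Lemma mem_A i (W : {set 'I_n}) : #|W| = i.+1 -> (m0 i.+1, W) \in kbasis Gam i.+1 i.+1.
Proof.
move=> cW; rewrite inE /= leqnn cW eqxx subnn /=; apply/andP; split.
  by rewrite /mdeg big1 // => t _; rewrite m0E.
by apply: cliqueP => u v; rewrite !inE m0E.
Qed.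

Lemma mem_C2 m u u' (H : {set 'I_n}) : e u u' -> #|H| = m ->
  (e2 m.+2 u u', H) \in kbasis Gam m m.+2.
Proof.
move=> euu cH; rewrite inE /=; apply/and4P; split; rewrite ?cH //.
- by rewrite -addn2 leq_addr.
- rewrite /mdeg (eq_bigr _ (fun t _ => e2E m u u' t)) big_split /= !sum_eq1.
  by rewrite -addn2 addKn.
- apply: cliqueP => s t; rewrite !inE.
  have sym := (proj1 Ge).
  have E1 := e2E m u u' s; have E2 := e2E m u u' t.
  move=> h1 h2; move: h1 h2 E1 E2.
  set x1 := (_ (e2 _ _ _) s); set x2 := (_ (e2 _ _ _) t) => h1 h2 E1 E2.
  move: h1 h2; rewrite E1 E2 => h1 h2 st.
  have hs : (s == u) || (s == u') by move: h1; case: (s == u); case: (s == u').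
  have ht : (t == u) || (t == u') by move: h2; case: (t == u); case: (t == u').
  case/orP: hs st => /eqP->; case/orP: ht => /eqP-> //; rewrite ?eqxx // sym // => _.

Qed.

Lemma mem_Cvv m v (H : {set 'I_n}) : #|H| = m -> (e2 m.+2 v v, H) \in kbasis Gam m m.+2.
Proof.
move=> cH; rewrite inE /=; apply/and4P; split; rewrite ?cH //.
- by rewrite -addn2 leq_addr.
- rewrite /mdeg (eq_bigr _ (fun t _ => e2E m v v t)) big_split /= !sum_eq1.
  by rewrite -addn2 addKn.
- apply: cliqueP => s t; rewrite !inE.
  have E1 := e2E m v v s; have E2 := e2E m v v t.
  move=> h1 h2; move: h1 h2 E1 E2.
  set x1 := (_ (e2 _ _ _) s); set x2 := (_ (e2 _ _ _) t) => h1 h2 E1 E2.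
  move: h1 h2; rewrite E1 E2 => h1 h2 st.
  have hs : (s == v) by move: h1; case: (s == v).
  have ht : (t == v) by move: h2; case: (t == v).
  by rewrite (eqP hs) (eqP ht) eqxx in st.
Qed.

Lemma eps_swap (W : {set 'I_n}) a b : a \in W -> b \in W -> a != b ->
  eps W a * eps (W :\ a) b + eps W b * eps (W :\ b) a = 0.
Proof.
wlog lt : a b / (a < b)%N.
  move=> h aW bW ab; case: (ltngtP a b) => [|ba|/val_inj/eqP]; first by move/h; apply.
    by rewrite addrC h // eq_sym.
  by rewrite (negbTE ab).
move=> aW bW ab.
have E1 : [set g in W :\ a | (g < b)%N] = [set g in W | (g < b)%N] :\ a.
  by apply/setP => t; rewrite !inE andbA [(t != a) && _]andbC.
have E2 : [set g in W :\ b | (g < a)%N] = [set g in W | (g < a)%N].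
  apply/setP => t; rewrite !inE; case: eqP => // ->; rewrite /=.
  by rewrite ltnNge (ltnW lt) andbF.
rewrite /eps E1 E2 (cardsD1 a [set g in W | (g < b)%N]) !inE aW lt /=.
by rewrite add1n exprS mulN1r mulNr [X in X + _]mulrC addrN.
Qed.

End Comb.


Section Core.
Local Open Scope ring_scope.
Variable F : fieldType.
Variable n : nat.
Variable e : rel 'I_n.
Hypothesis Ge : simple_graph e.
Local Notation Gam := (clique_complex e).
Local Notation T i := (monom n i.+1 * {set 'I_n})%type.
Local Notation eps := (@eps F n).

Definition bv i (W : {set 'I_n}) v : T i := (e1 i.+1 v, W :\ v).

Definition zf i (W P : {set 'I_n}) (x : T i) : F :=
  \sum_(v in P) eps W v * ((x == bv i W v) : nat)%:R.

Lemma sum1 (U : finType) (B : {set U}) (G : U -> F) y1 :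
  y1 \in B -> (forall y, y \in B -> y != y1 -> G y = 0) ->
  \sum_(y in B) G y = G y1.
Proof.
move=> y1B h; rewrite (bigD1 y1) //= big1 ?addr0 // => y /andP[yB ny].
exact: h.
Qed.

Lemma sum2 (U : finType) (B : {set U}) (G : U -> F) y1 y2 :
  y1 \in B -> y2 \in B -> y1 != y2 ->
  (forall y, y \in B -> y != y1 -> y != y2 -> G y = 0) ->
  \sum_(y in B) G y = G y1 + G y2.
Proof.
move=> y1B y2B ny h; rewrite (bigD1 y1) //= (bigD1 y2) /=; last by rewrite y2B eq_sym.
rewrite big1 ?addr0 // => y /andP[/andP[yB n1] n2]; exact: h.
Qed.

Lemma bv_inj i W : injective (bv i W).
Proof.
move=> v v' [] E _; have := congr1 (fun m : monom n i.+1 => (m v : nat)) E.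
by rewrite /= !e1E eqxx; case: eqP.
Qed.

Lemma sum_zf i (B : {set T i}) (W P : {set 'I_n}) (h : T i -> F) :
  (forall v, v \in P -> bv i W v \in B) ->
  \sum_(x in B) zf W P x * h x = \sum_(v in P) eps W v * h (bv i W v).
Proof.
move=> hB.
rewrite /zf (eq_bigr (fun x => \sum_(v in P) eps W v * ((x == bv i W v) : nat)%:R * h x));
  last by move=> x _; rewrite mulr_suml.
rewrite exchange_big /=; apply: eq_bigr => v vP.
rewrite (sum1 (y1 := bv i W v)) ?eqxx ?mulr1 //; first exact: hB.
by move=> y _ /negbTE ->; rewrite mulr0 mul0r.
Qed.

Lemma eps_neq0 S l : eps S l != 0.
Proof. by rewrite /Submission.eps signr_eq0. Qed.

Lemma setD1U1 (S : {set 'I_n}) l v :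
  v \notin S -> v != l -> l |: S = ((l |: S) :\ v) -> True.
Proof. by []. Qed.

Lemma kerZ m (W P : {set 'I_n}) :
  P \subset W -> (forall a b, a \in P -> b \in W -> e a b -> b \in P) ->
  forall c, c \in kbasis Gam m m.+2 ->
  \sum_(v in P) eps W v * kentry F (bv m.+1 W v) c = 0.
Proof.
move=> PW closed c cC.
case: (boolP [exists v in P, kentry F (bv m.+1 W v) c != 0]); last first.
  move/existsPn => h; apply: big1 => v vP.
  by move: (h v); rewrite vP /= negbK => /eqP ->; rewrite mulr0.
case/existsP => v /andP[vP /kentry_supp [l [lc hW hc]]].
rewrite /= in hW hc.
have vW : v \in W by apply: (subsetP PW).
have lW' : l \in W :\ v by rewrite hW setU11.
have lv : l != v by move: lW'; rewrite !inE => /andP[].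
have lW : l \in W by move: lW'; rewrite !inE => /andP[].
have hc' t : (c.1 t : nat) = ((t == v) + (t == l))%N by rewrite hc e1E.
have vl : v != l by rewrite eq_sym.
have evl : e v l.
  move: cC; rewrite inE => /and4P[_ _ _]; rewrite /clique_complex => /forallP /(_ v) /forallP /(_ l) /implyP; apply.
  by rewrite !inE !hc' !eqxx (negbTE vl) (negbTE lv).
have lP : l \in P by exact: (closed v l vP lW evl).
have c2 : c.2 = (W :\ v) :\ l by rewrite hW setU1K.
rewrite (sum2 (y1 := v) (y2 := l)) //; last first.
  { move=> t tP tv tl; apply/eqP; rewrite mulf_eq0; apply/orP; right.
    apply: contraTT isT => /kentry_supp [l' [_ _ hc2]] /=.
    move: (hc2 t); rewrite hc' e1E eqxx (negbTE tv) (negbTE tl).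
    by []. }
rewrite (kentryE F (l := l)) //=.
rewrite (kentryE F (l := v)) //=.
- exact: (eps_swap F).
- by rewrite c2 !inE eqxx andbF.
- apply/setP => t; rewrite c2 !inE; case: (t =P v) => [->|_]; rewrite ?vW ?lv //=.
  by rewrite andbC.
- by move=> t; rewrite hc' e1E addnC.
Qed.

Lemma kentryA i (W : {set 'I_n}) (x : T i) :
  kentry F (m0 n i.+1, W) x = zf W W x.
Proof.
case: (boolP [exists v in W, x == bv i W v]).
  case/existsP => v /andP[vW /eqP ->].
  rewrite /zf (sum1 (y1 := v)) ?eqxx ?mulr1 //.
    rewrite (kentryE F (l := v)) //=.
    - by rewrite !inE eqxx.
    - by rewrite setD1K.
    - by move=> t; rewrite e1E m0E.
  by move=> y _ yv; rewrite (inj_eq (@bv_inj i W)) eq_sym (negbTE yv) mulr0.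
move/existsPn => h.
rewrite /zf big1; last first.
  by move=> v vW; move: (h v); rewrite vW /= => /negbTE ->; rewrite mulr0.
apply/eqP; apply: contraTT isT => /kentry_supp [l [lx hW hx]].
rewrite /= in hW hx; have lW : l \in W by rewrite hW setU11.
suff E : x = bv i W l by move: (h l); rewrite lW E eqxx.
case: x lx hW hx h => m G /= lG -> hx _.
rewrite /bv setU1K //; congr pair.
by apply: monom_eq => t; rewrite hx e1E m0E.
Qed.

End Core.


Section Core2.
Local Open Scope ring_scope.
Variable F : fieldType.
Variable n : nat.
Variable e : rel 'I_n.
Hypothesis Ge : simple_graph e.
Local Notation Gam := (clique_complex e).
Local Notation T i := (monom n i.+1 * {set 'I_n})%type.
Local Notation eps := (@eps F n).

Definition fA i (a : T i) : T i :=
  if [pick v in a.2] is Some r then (e1 i.+1 r, a.2 :\ r) else a.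

Lemma pair_eq (s t b l : 'I_n) :
  (forall u, ((u == s) + (u == t) = (u == b) + (u == l))%N) ->
  (b = s /\ l = t) \/ (b = t /\ l = s).
Proof.
move=> h.
have := h b; rewrite eqxx.
case: (b =P s) => [bs|_]; case: (b =P t) => [bt|_] //= _.
- left; split => //; have := h t; rewrite eqxx -bt bs eqxx.
  by case: (s =P l).
- left; split => //; have := h t; rewrite eqxx -bs.
  by case: (t =P b) => //= _; case: (t =P l).
- right; split => //; have := h s; rewrite eqxx -bt.
  by case: (s =P b) => //= _; case: (s =P l).
Qed.

Lemma e1_inj j : injective (@e1 n j.+1).
Proof.
move=> v v' E; have := congr1 (fun m : monom n j.+1 => (m v : nat)) E.
by rewrite /= !e1E eqxx; case: eqP.
Qed.

Lemma bv_eq i (W S : {set 'I_n}) r v : r \in W -> v \in S ->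
  bv i W r = bv i S v -> W = S /\ r = v.
Proof.
move=> rW vS [] /e1_inj rv E; subst v; split=> //.
by rewrite -(setD1K rW) -(setD1K vS) E.
Qed.

Lemma fA_B i (W : {set 'I_n}) : #|W| = i.+1 ->
  exists2 r, r \in W & fA (m0 n i.+1, W) = bv i W r.
Proof.
move=> cW; rewrite /fA /=; case: pickP => [r rW|h]; first by exists r.
have : (0 < #|W|)%N by rewrite cW.
by rewrite card_gt0 => /set0Pn[x]; rewrite h.
Qed.

Lemma mem_bv i (W : {set 'I_n}) v : #|W| = i.+1 -> v \in W ->
  bv i W v \in kbasis Gam i i.+1.
Proof.
by move=> cW vW; apply: mem_B; move: cW; rewrite (cardsD1 v) vW add1n => -[].
Qed.

Lemma kentry_bv_supp m (y : T m.+1) (c : monom n m.+2 * {set 'I_n}) s t :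
  y \in kbasis Gam m.+1 m.+2 ->
  (forall u, (c.1 u : nat) = ((u == s) + (u == t))%N) ->
  kentry F y c != 0 ->
  exists l, [/\ l \notin c.2, y.2 = l |: c.2 &
     (y.1 = e1 m.+2 s /\ l = t) \/ (y.1 = e1 m.+2 t /\ l = s)].
Proof.
move=> yB hc /(kentry_supp (F := F)) [l [lc y2 hl]].
have [b [y1 _]] := B_elem yB.
exists l; split=> //.
have := @pair_eq s t b l; case.
  by move=> u; rewrite -hc hl y1 e1E.
- by case=> bs lt; left; rewrite y1 bs lt.
- by case=> bt ls; right; rewrite y1 bt ls.
Qed.

Lemma P1coreS m (g : T m.+1 -> F) :
  (forall W : {set 'I_n}, #|W| = m.+2 -> connected_minus e (~: W)) ->
  (forall c, c \in kbasis Gam m m.+2 ->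
     \sum_(x in kbasis Gam m.+1 m.+2) g x * kentry F x c = 0) ->
  (forall W : {set 'I_n}, #|W| = m.+2 -> g (fA (m0 n m.+2, W)) = 0) ->
  forall x, x \in kbasis Gam m.+1 m.+2 -> g x = 0.
Proof.
move=> conn H1 H2 x xB.
have [a [x1 cG]] := B_elem xB.
have step : forall W : {set 'I_n}, #|W| = m.+2 -> forall s t, s \in W -> t \in W ->
    e s t -> g (bv m.+1 W s) = 0 -> g (bv m.+1 W t) = 0.
  move=> W cW s t sW tW est gs.
  have st : s != t by apply: contraTneq est => ->; rewrite (proj2 Ge).
  have tW' : t \in W :\ s by rewrite !inE eq_sym st.
  have cWs : #|W :\ s| = m.+1 by move: cW; rewrite (cardsD1 s) sW add1n => -[].
  have cWst : #|W :\ s :\ t| = m by move: cWs; rewrite (cardsD1 t) tW' add1n => -[].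
  set c := (e2 m.+2 s t, W :\ s :\ t).
  have cC : c \in kbasis Gam m m.+2 by apply: (mem_C2 Ge).
  have hc u : (c.1 u : nat) = ((u == s) + (u == t))%N by rewrite e2E.
  have := H1 c cC.
  rewrite (sum2 (y1 := bv m.+1 W s) (y2 := bv m.+1 W t)); first last.
  - move=> y yB ys yt; apply/eqP; rewrite mulf_eq0; apply/orP; right.
    apply: contraTT isT => /(kentry_bv_supp yB hc) [l [lc y2 [[y1 lt]|[y1 ls]]]]; subst l.
      move: ys yt; case: y yB y1 y2 => y1 y2 /= _ -> -> ys yt.
      by move: ys; rewrite /bv /c /= setD1K // eqxx.
    move: ys yt; case: y yB y1 y2 => y1 y2 /= _ -> -> ys yt; move: yt.
    have E : s |: (W :\ s :\ t) = W :\ t.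
      apply/setP => u; rewrite !inE; case: (u =P s) => [->|_] /=; last by case: (u == t).
      by rewrite st sW.
    by rewrite /bv /c /= E eqxx.
  - by apply: contra st => /eqP /bv_inj ->.
  - exact: mem_bv.
  - exact: mem_bv.
  rewrite gs mul0r add0r (kentryE F (l := s)) /=.
  - by move/eqP; rewrite mulf_eq0 (negbTE (eps_neq0 F _ _)) orbF => /eqP.
  - by rewrite !inE eqxx andbF.
  - apply/setP => u; rewrite !inE; case: (u =P s) => [->|_]; rewrite ?sW //=.
    by rewrite st.
  - by move=> u; rewrite hc e1E addnC.
case: x xB x1 cG => mo G xB /= -> cG.
case: (boolP (a \in G)) => aG.
  set c := (e2 m.+2 a a, G :\ a).
  have cGa : #|G :\ a| = m by move: cG; rewrite (cardsD1 a) aG add1n => -[].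
  have cC : c \in kbasis Gam m m.+2 by apply: mem_Cvv.
  have hc u : (c.1 u : nat) = ((u == a) + (u == a))%N by rewrite e2E.
  have := H1 c cC.
  rewrite (sum1 (y1 := (e1 m.+2 a, G))); first last.
  - move=> y yB yx; apply/eqP; rewrite mulf_eq0; apply/orP; right.
    apply: contraTT isT => /(kentry_bv_supp yB hc) [l [lc y2 [[y1 lt]|[y1 ls]]]]; subst l;
    move: yx; case: y yB y1 y2 => y1 y2 /= _ -> ->;
    by rewrite /c /= setD1K // eqxx.
  - exact: mem_B.
  rewrite (kentryE F (l := a)) /=.
  - by move/eqP; rewrite mulf_eq0 (negbTE (eps_neq0 F _ _)) orbF => /eqP.
  - by rewrite !inE eqxx.
  - by rewrite setD1K.
  - by move=> u; rewrite hc e1E.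
set W := a |: G.
have cW : #|W| = m.+2 by rewrite cardsU1 aG cG.
have aW : a \in W by rewrite setU11.
have [r rW fr] := fA_B cW.
have gr := H2 W cW; rewrite fr in gr.
have : connect [rel x y | [&& e x y, x \notin ~: W & y \notin ~: W]] r a.
  move: (conn W cW) => /forallP /(_ r) /forallP /(_ a) /implyP; apply.
  by rewrite !in_setC !negbK rW aW.
case/connectP => p pth ea.
have -> : (e1 m.+2 a, G) = bv m.+1 W (last r p) by rewrite -ea /bv /W setU1K.
clear fr ea; elim: p r rW gr pth => [|t p IH] r rW gr //= /andP[/and3P[ert _ tW] pth].
rewrite in_setC negbK in tW.
apply: (IH t tW _ pth).
exact: (step W cW r t rW tW ert gr).
Qed.


Lemma P1core0 (g : T 0 -> F) :
  (forall W : {set 'I_n}, #|W| = 1%N -> g (fA (m0 n 1, W)) = 0) ->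
  forall x, x \in kbasis Gam 0 1 -> g x = 0.
Proof.
move=> H2 x xB.
have [a [x1 cG]] := B_elem xB.
have c1 : #|[set a]| = 1%N by rewrite cards1.
have [r rW fr] := fA_B c1.
move: (H2 _ c1); rewrite fr.
move: rW; rewrite inE => /eqP ->.
case: x xB x1 cG => mo G /= _ -> /eqP; rewrite cards_eq0 => /eqP ->.
by rewrite /bv setDv.
Qed.

Definition psi i (W : {set 'I_n}) p q (x : T i) : F :=
  eps W p * ((x == bv i W p) : nat)%:R - eps W q * ((x == bv i W q) : nat)%:R.

Lemma psi_bv i (W S : {set 'I_n}) p q v : p \in W -> q \in W -> v \in S ->
  psi W p q (bv i S v) =
  if S == W then eps W p * ((v == p) : nat)%:R - eps W q * ((v == q) : nat)%:R else 0.
Proof.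
move=> pW qW vS; rewrite /psi.
case: (S =P W) => [->|SW].
  by rewrite !(inj_eq (@bv_inj _ _ _)).
have E u : u \in W -> (bv i S v == bv i W u) = false.
  by move=> uW; apply/negP => /eqP /(bv_eq vS uW) [].
by rewrite !E // !mulr0 subrr.
Qed.

Lemma phiA i (W : {set 'I_n}) p q (a : T i) :
  p \in W -> q \in W -> p != q -> a \in kbasis Gam i.+1 i.+1 ->
  \sum_(x in kbasis Gam i i.+1) kentry F a x * psi W p q x = 0.
Proof.
move=> pW qW pq aA.
have [a1 cS] := A_elem aA.
case: a aA a1 cS => a1 S /= _ -> cS.
rewrite (eq_bigr (fun x => zf F S S x * psi W p q x)); last by move=> x _; rewrite kentryA.
rewrite sum_zf; last by move=> v vS; apply: mem_bv.
rewrite (eq_bigr (fun v => eps S v * (if S == W then eps W p * ((v == p) : nat)%:R -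
    eps W q * ((v == q) : nat)%:R else 0))); last by move=> v vS; rewrite psi_bv.
case: (S =P W) => [->|_]; last by rewrite big1 // => v _; rewrite mulr0.
rewrite (eq_bigr (fun v => eps W v * (eps W p * ((v == p) : nat)%:R) -
   eps W v * (eps W q * ((v == q) : nat)%:R))); last by move=> v _; rewrite mulrBr.
rewrite sumrB (sum1 (y1 := p)) // ?eqxx ?mulr1 ?eps2; last first.
  by move=> y _ /negbTE ->; rewrite !mulr0.
rewrite (sum1 (y1 := q)) // ?eqxx ?mulr1 ?eps2 ?subrr //.
by move=> y _ /negbTE ->; rewrite !mulr0.
Qed.

Lemma phiZ i (W P : {set 'I_n}) p q :
  #|W| = i.+1 -> P \subset W -> p \in P -> q \in W -> q \notin P ->
  \sum_(x in kbasis Gam i i.+1) zf F W P x * psi W p q x = 1.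
Proof.
move=> cW PW pP qW qP.
have pW : p \in W by apply: (subsetP PW).
rewrite sum_zf; last by move=> v vP; apply: mem_bv => //; apply: (subsetP PW).
rewrite (sum1 (y1 := p)) //.
  rewrite psi_bv // eqxx eqxx.
  have -> : (p == q) = false by apply/negP => /eqP E; move: qP; rewrite -E pP.
  by rewrite mulr0 subr0 mulr1 eps2.
move=> v vP vp; rewrite psi_bv //; last exact: (subsetP PW).
rewrite eqxx (negbTE vp).
have -> : (v == q) = false by apply/negP => /eqP E; move: qP; rewrite -E vP.
by rewrite !mulr0 subrr mulr0.
Qed.

End Core2.


Section Mx.
Local Open Scope ring_scope.
Variable F : fieldType.
Variable n : nat.
Variable e : rel 'I_n.
Hypothesis Ge : simple_graph e.
Local Notation Gam := (clique_complex e).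

Definition pimx i := \matrix_(r < #|kbasis Gam i i.+1|, c < #|kbasis Gam i.+1 i.+1|)
   (((enum_val r == fA (enum_val c)) : nat)%:R : F).

Lemma wpi i (w : 'rV[F]_#|kbasis Gam i i.+1|) (W : {set 'I_n}) : #|W| = i.+1 ->
  exists c, (w *m pimx i) 0 c = wf w (fA (m0 n i.+1, W)).
Proof.
move=> cW; have aA := mem_A e cW.
exists (enum_rank_in aA (m0 n i.+1, W)).
rewrite /pimx (mulmx_wf _ (fun x y => ((x == fA y) : nat)%:R)) enum_rankK_in //.
have [r rW ->] := fA_B cW.
rewrite (sum1 (y1 := bv i W r)) ?eqxx ?mulr1 //; first exact: mem_bv.
by move=> y _ /negbTE ->; rewrite mulr0.
Qed.

Lemma rank_dA i : \rank (kdiff F Gam i i.+1) = #|kbasis Gam i.+1 i.+1|.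
Proof.
apply: inj_rank => z hz; apply: wf0 => a aA.
have [a1 cW] := A_elem aA.
case: a aA a1 cW => a1 W aA /= Ea cW; subst a1.
have [r rW fr] := fA_B cW.
have bB : bv i W r \in kbasis Gam i i.+1 by exact: mem_bv.
have := congr1 (fun M : 'rV[F]_#|kbasis Gam i i.+1| => M 0 (enum_rank_in bB (bv i W r))) hz.
rewrite /kdiff (mulmx_wf _ (@kentry F _ _)) mxE enum_rankK_in //.
rewrite (sum1 (y1 := (m0 n i.+1, W))) //; last first.
  move=> y yA ya; apply/eqP; rewrite mulf_eq0; apply/orP; right.
  have [y1 cS] := A_elem yA.
  case: y yA ya y1 cS => y1 S yA ya /= Ey cS; subst y1.
  rewrite kentryA /zf big1 // => v vS.
  case: eqP => [/esym/(bv_eq vS rW) [SW _]|_]; last by rewrite mulr0.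
  by move: ya; rewrite SW eqxx.
rewrite (kentryE F (l := r)) /=.
- by move/eqP; rewrite mulf_eq0 (negbTE (eps_neq0 F _ _)) orbF => /eqP.
- by rewrite !inE eqxx.
- by rewrite setD1K.
- by move=> t; rewrite e1E m0E.
Qed.

Lemma zeroS m : (forall W : {set 'I_n}, #|W| = m.+2 -> connected_minus e (~: W)) ->
  betti F Gam m.+1 m.+2 = 0%N.
Proof.
move=> conn; rewrite /betti rank_dA; apply/eqP; rewrite subn_eq0 -mxrank_ker.
apply: (ker_bound (P := pimx m.+1)) => w wK wP.
apply: wf0 => x xB; apply: (P1coreS Ge (g := wf w)) => //.
- move=> c cC.
  have := congr1 (fun M : 'rV[F]_#|kbasis Gam m m.+2| => M 0 (enum_rank_in cC c)) (sub_kermxP wK).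
  by rewrite /kdiff (mulmx_wf _ (@kentry F _ _)) mxE enum_rankK_in.
- move=> W cW; have [c <-] := wpi w cW.
  by rewrite wP mxE.
Qed.

Lemma zero0 : betti F Gam 0 1 = 0%N.
Proof.
rewrite /betti rank_dA subn0; apply/eqP; rewrite subn_eq0.
rewrite -(mxrank1 F #|kbasis Gam 0 1|).
apply: (ker_bound (P := pimx 0)) => w _ wP.
apply: wf0 => x xB; apply: (@P1core0 F n e (wf w)) => // W cW.
by have [c <-] := wpi w cW; rewrite wP mxE.
Qed.


Lemma posS m (W : {set 'I_n}) u v : #|W| = m.+2 -> u \in W -> v \in W ->
  ~~ connect [rel x y | [&& e x y, x \notin ~: W & y \notin ~: W]] u v ->
  (0 < betti F Gam m.+1 m.+2)%N.
Proof.
set R := [rel x y | [&& e x y, x \notin ~: W & y \notin ~: W]].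
move=> cW uW vW nc.
set P := [set t in W | connect R u t].
have PW : P \subset W by apply/subsetP => t; rewrite inE => /andP[].
have uP : u \in P by rewrite inE uW connect0.
have vP : v \notin P by rewrite inE vW.
have uv : u != v by apply: contraNneq nc => ->; rewrite connect0.
have closed : forall a b, a \in P -> b \in W -> e a b -> b \in P.
  move=> a b; rewrite !inE => /andP[aW ua] bW eab; rewrite bW /=.
  apply: (connect_trans ua); apply: connect1.
  by rewrite /= eab !in_setC !negbK aW bW.
have hrow : forall r : 'I_#|kbasis Gam m.+2 m.+2|, exists S : {set 'I_n},
    enum_val r = (m0 n m.+2, S).
  move=> r; have [E _] := A_elem (enum_valP r).
  by exists (enum_val r).2; rewrite -E; case: (enum_val r).
rewrite /betti subn_gt0.
apply: (@strict_rank F _ _ _ _ _ (\row_(k < #|kbasis Gam m.+1 m.+2|) zf F W P (enum_val k))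
                                 (\col_(k < #|kbasis Gam m.+1 m.+2|) psi F W u v (enum_val k))).
- apply/row_matrixP => r; rewrite row_mul row0; apply/rowP => c.
  rewrite [X in (_ *m X)]/kdiff (mulmx_wf _ (@kentry F _ _)) mxE.
  rewrite (eq_bigr (fun x => kentry F (enum_val r) x * kentry F x (enum_val c))); last first.
    by move=> x xB; rewrite /kdiff wf_row.
  have [S ES] := hrow r; rewrite ES.
  rewrite (eq_bigr (fun x => zf F S S x * kentry F x (enum_val c))); last first.
    by move=> x _; rewrite kentryA.
  have cS : #|S| = m.+2 by have [_] := A_elem (enum_valP r); rewrite ES.
  rewrite sum_zf; last by move=> t tS; apply: mem_bv.
  apply: (kerZ F (W := S) (P := S)); [exact: subxx | by move=> a b _ bS _ | exact: enum_valP].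
- apply/rowP => c; rewrite [X in (_ *m X)]/kdiff (mulmx_wf _ (@kentry F _ _)) mxE.
  rewrite (eq_bigr (fun x => zf F W P x * kentry F x (enum_val c))); last first.
    by move=> x xB; rewrite wf_rowof.
  rewrite sum_zf; last by move=> t tP; apply: mem_bv => //; apply: (subsetP PW).
  apply: (kerZ F (W := W) (P := P)); [exact: PW | exact: closed | exact: enum_valP].
- apply/colP => r.
  transitivity ((row r (kdiff F Gam m.+1 m.+2) *m
     (\col_(k < #|kbasis Gam m.+1 m.+2|) psi F W u v (enum_val k))) 0 0).
    by rewrite -row_mul [RHS]mxE.
  rewrite mulmx_col mxE.
  rewrite (eq_bigr (fun x => kentry F (enum_val r) x * psi F W u v x)); last first.
    by move=> x xB; rewrite /kdiff wf_row.
  by apply: (phiA F) => //; apply: enum_valP.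
- apply/eqP => /matrixP /(_ 0 0); rewrite mulmx_col mxE.
  rewrite (eq_bigr (fun x => zf F W P x * psi F W u v x)); last first.
    by move=> x xB; rewrite wf_rowof.
  by rewrite (phiZ F e cW PW uP vW vP); apply/eqP; rewrite oner_eq0.
Qed.

End Mx.


Section Fin.
Variable F : fieldType.
Variable n : nat.
Variable e : rel 'I_n.
Hypothesis Ge : simple_graph e.
Local Notation Gam := (clique_complex e).

Lemma betti_iff i : betti F Gam i i.+1 = 0%N <->
  (forall W : {set 'I_n}, #|W| = i.+1 -> connected_minus e (~: W)).
Proof.
split; last first.
  by case: i => [|m] h; [exact: zero0 | exact: zeroS].
move=> h0 W cW; apply/negPn/negP.
rewrite /connected_minus negb_forall => /existsP[u]; rewrite negb_forall => /existsP[v].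
rewrite negb_imply => /andP[/andP[uS vS] nc].
rewrite in_setC negbK in uS; rewrite in_setC negbK in vS.
case: i h0 cW => [|m] h0 cW.
  move/eqP/cards1P: cW => [w Ew].
  move: uS vS nc; rewrite Ew !inE => /eqP -> /eqP ->.
  by rewrite connect0.
by have := posS F cW uS vS nc; rewrite h0.
Qed.

End Fin.

Theorem theorem3p1 (F : fieldType) (charF0 : [pchar F]%R =i pred0)
  (n : nat) (e : rel 'I_n) (Ge : simple_graph e) :
  (forall k : nat, (k <= n)%N ->
     (kconnected e k <->
      (forall i : nat, (n - k <= i)%N -> betti F (clique_complex e) i i.+1 = 0%N)))
  /\
  ((forall i : nat, (n - kappa e <= i)%N ->
      betti F (clique_complex e) i i.+1 = 0%N)
   /\ (forall k : nat, (k <= n)%N ->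
        (forall i : nat, (n - k <= i)%N -> betti F (clique_complex e) i i.+1 = 0%N) ->
        (k <= kappa e)%N)).
Proof.
have iff : forall k : nat, (k <= n)%N ->
     (kconnected e k <->
      (forall i : nat, (n - k <= i)%N -> betti F (clique_complex e) i i.+1 = 0%N)).
  move=> k hk; split.
    move=> /andP[_ /forallP hS] i hi; apply/(betti_iff F Ge) => W cW.
    apply: (implyP (hS (~: W))).
    have := cardsC W; rewrite card_ord cW => hc.
    have := max_card W; rewrite card_ord cW => hn.
    lia.
  move=> hb; rewrite /kconnected hk /=; apply/forallP => S; apply/implyP => cS.
  have := cardsC S; rewrite card_ord => hc.
  have cW : #|~: S| = (n - #|S| - 1).+1.
    move: hc cS; set a := #|S|; set b := #|~: S|; move=> hc cS; lia.
  have := (proj1 (betti_iff F Ge _) (hb _ _)) (~: S) cW.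
  rewrite setCK; apply; move: cS; set a := #|S|; move=> cS; lia.
split => //.
have k0 : kconnected e 0 by rewrite /kconnected leq0n; apply/forallP => S.
have [i0 Ai0 E] : exists2 i0 : 'I_n.+1, kconnected e i0 & kappa e = i0.
  have k0' : (fun j : 'I_n.+1 => kconnected e j) (ord0 : 'I_n.+1) by [].
  exists [arg max_(i > (ord0 : 'I_n.+1) | kconnected e i) (i : nat)].
    by case: (@arg_maxnP _ ord0 (fun j : 'I_n.+1 => kconnected e j) (fun i : 'I_n.+1 => nat_of_ord i) k0').
  exact: (@bigmax_eq_arg _ ord0 (fun j : 'I_n.+1 => kconnected e j) (fun i : 'I_n.+1 => nat_of_ord i) k0').
split.
  rewrite E; apply/(iff _ _) => //; rewrite -ltnS; exact: ltn_ord.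
move=> k hk hb.
have := iff k hk => -[_ /(_ hb) Hk].
rewrite /kappa.
have hk' : (k < n.+1)%N by [].
exact: (@leq_bigmax_cond _ (fun j : 'I_n.+1 => kconnected e j) (fun j : 'I_n.+1 => nat_of_ord j) (Ordinal hk') Hk).
Qed.
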